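(* Let $\beta=\beta_n>0$, $p_1=p_1(n)\ge n$, $p_2=p_2(n)\ge n$, $p=p_1+p_2$, and suppose that as $n\to\infty$, $n/p_1\to0$, $p_1/p_2\to\sigma\in[0,\infty)$ and $\beta n\to\infty$. Then $$\log A_n^{p_1,p_2}=\frac{\beta p_1}{2}\log\frac{p}{p_1}+\frac{\beta p_2}{2}\log\frac{p}{p_2}+\frac{\beta(n-1)}{2}\log\frac{p}{n}+\frac12\log(\beta p_1)+\frac12\beta n+o(\beta n).$$
   Context: $$A_n^{p_1,p_2}=\frac{\Gamma(1+\frac\beta2)\Gamma(\frac{\beta p}{2})\Gamma(\frac{\beta(p-1)}{2})}{\Gamma(1+\frac{\beta n}{2})\Gamma(\frac{\beta p_1}{2})\Gamma(\frac{\beta p_2}{2})\Gamma(\frac{\beta(p-n)}{2})}.$$ *)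

(* Defs.v *)
From Stdlib Require Import Reals.
From Coquelicot Require Import Coquelicot.
Open Scope R_scope.

Definition Gamma (x : R) : R :=
  RInt_gen (fun t => Rpower t (x - 1) * exp (- t))
           (at_right 0) (Rbar_locally p_infty).

Definition A_const (beta : R) (n p1 p2 : nat) : R :=
  let p := INR p1 + INR p2 in
  (Gamma (1 + beta / 2) * Gamma (beta * p / 2) * Gamma (beta * (p - 1) / 2))
  / (Gamma (1 + beta * INR n / 2) * Gamma (beta * INR p1 / 2)
     * Gamma (beta * INR p2 / 2) * Gamma (beta * (p - INR n) / 2)).

(* Main.v *)
Require Import Defs.
From Stdlib Require Import Reals Lra Psatz.
From Coquelicot Require Import Coquelicot.
Open Scope R_scope.

Definition fg (x t : R) : R := Rpower t x * exp (- t).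

Lemma fg_exp x t : 0 < t -> fg x t = exp (x * ln t - t).
Proof. intros; unfold fg, Rpower; rewrite <- exp_plus; f_equal; ring. Qed.

Lemma fg_pos x t : 0 < fg x t.
Proof. unfold fg, Rpower. apply Rmult_lt_0_compat; apply exp_pos. Qed.

Lemma fg_cont x t : 0 < t -> continuous (fg x) t.
Proof.
  intros Ht. apply (@ex_derive_continuous R_AbsRing R_NormedModule). unfold fg, Rpower. auto_derive. lra.
Qed.

Lemma fg_ex x a b : 0 < a -> 0 < b -> ex_RInt (fg x) a b.
Proof.
  intros Ha Hb. apply (@ex_RInt_continuous R_CompleteNormedModule). intros z Hz. apply fg_cont.
  assert (0 < Rmin a b) by (apply Rmin_pos; lra). lra.
Qed.

Lemma ln_le_sub1 u : 0 < u -> ln u <= u - 1.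
Proof. intros Hu. pose proof (exp_ineq1_le (ln u)). rewrite exp_ln in H; lra. Qed.

Lemma is_RInt_expl k m c d : k <> 0 ->
  is_RInt (fun t => exp (k * t + m)) c d ((exp (k * d + m) - exp (k * c + m)) / k).
Proof.
  intros Hk.
  assert (E : (exp (k * d + m) - exp (k * c + m)) / k =
     minus ((fun t => exp (k * t + m) / k) d) ((fun t => exp (k * t + m) / k) c)).
  { unfold minus, plus, opp; simpl. field. auto. }
  rewrite E. apply (@is_RInt_derive R_CompleteNormedModule (fun t => exp (k * t + m) / k)).
  - intros t _. auto_derive; auto. field. auto.
  - intros t _. apply (@ex_derive_continuous R_AbsRing R_NormedModule). auto_derive. auto.
Qed.

Lemma exp_le_exp x y : x <= y -> exp x <= exp y.
Proof. intros [H|H]. left; apply exp_increasing; auto. subst; lra. Qed.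

Definition FF := filter_prod (at_right 0) (Rbar_locally p_infty).

Lemma FF_proper : ProperFilter FF.
Proof. apply filter_prod_proper; try apply at_right_proper_filter; apply Rbar_locally_filter. Qed.

Lemma FF_box d M : 0 < d -> FF (fun ab => 0 < fst ab < d /\ M < snd ab).
Proof.
  intros Hd. apply (Filter_prod _ _ _ (fun a => 0 < a < d) (fun b => M < b)).
  - exists (mkposreal d Hd). intros y Hy Hy0. 
    change (Rabs (y - 0) < d) in Hy. rewrite Rminus_0_r, Rabs_right in Hy; lra.
  - exists M. auto.
  - intros; simpl; auto.
Qed.

Lemma ball_R (x y e : R) : Rabs (y - x) < e -> ball x e y.
Proof. intros H. exact H. Qed.

Lemma fg_maj x : 0 <= x -> exists m, forall t, 0 < t -> fg x t <= exp (-/2 * t + m).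
Proof.
  intros Hx. destruct (Req_dec x 0) as [H0|H0].
  - exists 0. intros t Ht. rewrite fg_exp by auto. apply exp_le_exp. subst. lra.
  - exists (x * ln (2 * x) - x). intros t Ht. rewrite fg_exp by auto. apply exp_le_exp.
    assert (Hx' : 0 < x) by lra.
    pose proof (ln_le_sub1 (t / (2 * x)) ltac:(apply Rdiv_lt_0_compat; lra)).
    rewrite ln_div in H by lra.
    assert (x * (ln t - ln (2 * x)) <= x * (t / (2 * x) - 1)) by (apply Rmult_le_compat_l; lra).
    replace (x * (t / (2 * x) - 1)) with (t / 2 - x) in H1 by (field; lra). lra.
Qed.

Lemma fg_head x t : 0 <= x -> 0 < t <= 1 -> fg x t <= 1.
Proof.
  intros Hx Ht. rewrite fg_exp by lra. rewrite <- exp_0. apply exp_le_exp.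
  assert (ln t <= 0). { rewrite <- ln_1. apply ln_le; lra. }
  assert (x * ln t <= 0) by (apply Rmult_le_0_l_compat_reverse; lra) || nra. lra.
Qed.

Lemma RInt_abs_sym (f : R -> R) (S : R -> Prop) B :
  (forall c d, S c -> S d -> ex_RInt f c d) ->
  (forall c d, S c -> S d -> c <= d -> Rabs (RInt f c d) <= B) ->
  forall c d, S c -> S d -> Rabs (RInt f c d) <= B.
Proof.
  intros Hex H c d Hc Hd. destruct (Rle_dec c d) as [l|l]. auto.
  rewrite <- opp_RInt_swap by auto. 
  change (Rabs (- RInt f d c) <= B). rewrite Rabs_Ropp. apply H; auto; lra.
Qed.

Lemma RInt_split3 (f : R) a b a' b' : 0 < a -> 0 < b -> 0 < a' -> 0 < b' ->
  RInt (fg f) a' b' = RInt (fg f) a' a + RInt (fg f) a b + RInt (fg f) b b'.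
Proof.
  intros.
  rewrite <- (RInt_Chasles (fg f) a' a b') by (apply fg_ex; auto).
  rewrite <- (RInt_Chasles (fg f) a b b') by (apply fg_ex; auto).
  change plus with Rplus. simpl. ring.
Qed.

Lemma fg_tail x m c d : (forall t, 0 < t -> fg x t <= exp (-/2 * t + m)) ->
  0 < c <= d -> Rabs (RInt (fg x) c d) <= 2 * exp (-/2 * c + m).
Proof.
  intros Hm Hcd.
  assert (Hi := is_RInt_expl (-/2) m c d ltac:(lra)).
  assert (Hf := RInt_correct (fg x) c d (fg_ex x c d ltac:(lra) ltac:(lra))).
  assert (H1 := is_RInt_le _ _ c d _ _ ltac:(lra) Hf Hi ltac:(intros t Ht; apply Hm; lra)).
  assert (H0 : 0 <= RInt (fg x) c d).
  { apply RInt_ge_0. lra. apply fg_ex; lra. intros; left; apply fg_pos. }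
  rewrite Rabs_right by lra.
  assert (0 < exp (-/2 * d + m)) by apply exp_pos.
  replace ((exp (- / 2 * d + m) - exp (- / 2 * c + m)) / - / 2) with
    (2 * exp (- / 2 * c + m) - 2 * exp (- / 2 * d + m)) in H1 by field. lra.
Qed.

Lemma fg_headb x dl c d : 0 <= x -> dl <= 1 -> 0 < c <= dl -> 0 < d <= dl -> Rabs (RInt (fg x) c d) <= dl.
Proof.
  intros Hx Hdl Hc Hd.
  apply (RInt_abs_sym (fg x) (fun t => 0 < t <= dl)) with (c := c) (d := d); auto.
  - intros; apply fg_ex; lra.
  - intros c' d' Hc' Hd' Hcd.
    eapply Rle_trans. apply abs_RInt_le_const with (M := 1). auto. apply fg_ex; lra.
    intros t Ht. rewrite Rabs_right. apply fg_head; lra. left; apply fg_pos. lra.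
Qed.

Lemma fg_tailb x m M c d : (forall t, 0 < t -> fg x t <= exp (-/2 * t + m)) -> 0 < M ->
  M < c -> M < d -> Rabs (RInt (fg x) c d) <= 2 * exp (-/2 * M + m).
Proof.
  intros Hm HM Hc Hd.
  apply (RInt_abs_sym (fg x) (fun t => M < t)) with (c := c) (d := d); auto.
  - intros; apply fg_ex; lra.
  - intros c' d' Hc' Hd' Hcd. eapply Rle_trans. apply (fg_tail x m); auto. lra.
    apply Rmult_le_compat_l. lra. apply exp_le_exp. lra.
Qed.

Lemma fg_lim x : 0 <= x -> exists y, filterlim (fun ab => RInt (fg x) (fst ab) (snd ab)) FF (locally y).
Proof.
  intros Hx. destruct (fg_maj x Hx) as [m Hm].
  apply (filterlim_locally_cauchy (F := FF) _) || apply (proj1 (filterlim_locally_cauchy (F := FF) _)). 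
  intros eps.
  set (dl := Rmin 1 (eps / 4)).
  assert (Hdl0 : 0 < dl) by (apply Rmin_pos; [lra| destruct eps; simpl; lra]).
  assert (Hdl1 : dl <= 1) by apply Rmin_l.
  assert (Hdl2 : dl <= eps / 4) by apply Rmin_r.
  set (M := Rmax 1 (2 * (m - ln (eps / 8)))).
  assert (HM1 : 1 <= M) by apply Rmax_l.
  assert (HM2 : 2 * (m - ln (eps / 8)) <= M) by apply Rmax_r.
  assert (Heps : 0 < eps) by (destruct eps; simpl; lra).
  assert (Htail : 2 * exp (-/2 * M + m) <= eps / 4).
  { assert (exp (-/2 * M + m) <= exp (ln (eps / 8))) by (apply exp_le_exp; lra).
    rewrite exp_ln in H by lra. lra. }
  exists (fun ab => 0 < fst ab < dl /\ M < snd ab). split. apply FF_box; auto.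
  intros [a b] [a' b'] [[Ha1 Ha2] Hb] [[Ha1' Ha2'] Hb']. simpl in *.
  apply ball_R.
  rewrite (RInt_split3 x a b a' b') by lra.
  assert (H1 := fg_headb x dl a' a Hx Hdl1 ltac:(lra) ltac:(lra)).
  assert (H2 := fg_tailb x m M b b' Hm ltac:(lra) Hb Hb').
  replace (RInt (fg x) a' a + RInt (fg x) a b + RInt (fg x) b b' - RInt (fg x) a b)
    with (RInt (fg x) a' a + RInt (fg x) b b') by ring.
  eapply Rle_lt_trans. apply Rabs_triang. lra.
Qed.

Lemma Gamma_lim y : 1 <= y ->
  filterlim (fun ab => RInt (fg (y - 1)) (fst ab) (snd ab)) FF (locally (Gamma y)).
Proof.
  intros Hy. destruct (fg_lim (y - 1) ltac:(lra)) as [l Hl].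
  assert (HG : Gamma y = l).
  { unfold Gamma. apply is_RInt_gen_unique.
    unfold is_RInt_gen.
    apply (filterlimi_lim_ext_loc (fun ab => RInt (fg (y - 1)) (fst ab) (snd ab))).
    - eapply filter_imp. 2: apply (FF_box 1 0); lra.
      intros [a b] [[Ha _] Hb]. simpl in *. apply RInt_correct. apply fg_ex; lra.
    - exact Hl. }
  rewrite HG. exact Hl.
Qed.

Lemma Gamma_bounds y lo hi : 1 <= y ->
  (exists dl M, 0 < dl /\ forall a b, 0 < a < dl -> M < b -> lo <= RInt (fg (y - 1)) a b <= hi) ->
  lo <= Gamma y <= hi.
Proof.
  intros Hy [dl [M [Hdl H]]].
  assert (HL := Gamma_lim y Hy).
  assert (HB := FF_box dl M Hdl).
  split.
  - apply (filterlim_le (F := FF) (fun _ => lo) (fun ab => RInt (fg (y - 1)) (fst ab) (snd ab)) lo (Gamma y)).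
    + eapply filter_imp. 2: exact HB. intros [a b] [Ha Hb]; apply H; auto.
    + apply filterlim_const.
    + exact HL.
  - apply (filterlim_le (F := FF) (fun ab => RInt (fg (y - 1)) (fst ab) (snd ab)) (fun _ => hi) (Gamma y) hi).
    + eapply filter_imp. 2: exact HB. intros [a b] [Ha Hb]; apply H; auto.
    + exact HL.
    + apply filterlim_const.
Qed.

Lemma P1 x t : 1 <= x -> 0 < t ->
  x * ln t - t <= x * ln x - x + /4 - Rabs (t - x) / (4 * sqrt x).
Proof.
  intros Hx Ht.
  set (r := sqrt x). set (s := sqrt t).
  assert (Hr1 : 1 <= r). { unfold r. rewrite <- sqrt_1. apply sqrt_le_1_alt. lra. }
  assert (Hs : 0 < s) by (apply sqrt_lt_R0; lra).
  assert (Ex : x = r * r) by (unfold r; rewrite sqrt_sqrt; lra).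
  assert (Et : t = s * s) by (unfold s; rewrite sqrt_sqrt; lra).
  assert (A : ln s - ln r <= s / r - 1).
  { rewrite <- ln_div by lra. apply ln_le_sub1. apply Rdiv_lt_0_compat; lra. }
  assert (Lt : ln t = 2 * ln s) by (rewrite Et, ln_mult by lra; ring).
  assert (Lx : ln x = 2 * ln r) by (rewrite Ex, ln_mult by lra; ring).
  assert (B : x * (ln t - ln x) <= 2 * r * (s - r)).
  { rewrite Lt, Lx, Ex. replace (2 * r * (s - r)) with (r * r * (2 * (s / r - 1))) by (field; lra).
    apply Rmult_le_compat_l; nra. }
  fold r.
  assert (C : - (s - r) * (s - r) <= / 4 - Rabs (t - x) / (4 * r)).
  { assert (Hq : Rabs (t - x) / (4 * r) * (4 * r) = Rabs (t - x)) by (field; lra).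
    set (q := Rabs (t - x) / (4 * r)) in *.
    destruct (Rle_dec r s) as [h|h].
    - rewrite Rabs_right in Hq by nra. rewrite Et, Ex in Hq.
      assert (E1 : q * r = (s - r) * (s + r) / 4) by lra.
      assert (E2 : q <= (s - r) * (s - r) / 4 + (s - r) / 2).
      { apply Rmult_le_reg_r with r. lra. rewrite E1.
        assert (0 <= (s - r) * (s - r) * (r - 1)) by (apply Rmult_le_pos; nra). nra. }
      pose proof (Rle_0_sqr (s - r - /3)) as Hsq; unfold Rsqr in Hsq. nra.
    - rewrite Rabs_left in Hq by nra. rewrite Et, Ex in Hq.
      assert (E1 : q * r = (r - s) * (s + r) / 4) by lra.
      assert (E2 : q <= (r - s) / 2).
      { apply Rmult_le_reg_r with r. lra. rewrite E1. nra. }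
      pose proof (Rle_0_sqr (r - s - /4)) as Hsq; unfold Rsqr in Hsq. nra. }
  rewrite Et, Ex in *. nra.
Qed.

Lemma P2 x t : 1 <= x -> x <= t <= x + sqrt x -> x * ln x - x - 1 <= x * ln t - t.
Proof.
  intros Hx Ht.
  assert (Hs : sqrt x * sqrt x = x) by (apply sqrt_sqrt; lra).
  assert (Hs0 : 0 <= sqrt x) by apply sqrt_pos.
  assert (A : ln (x / t) <= x / t - 1) by (apply ln_le_sub1; apply Rdiv_lt_0_compat; lra).
  rewrite ln_div in A by lra.
  assert (B : x * (1 - x / t) <= x * (ln t - ln x)) by (apply Rmult_le_compat_l; lra).
  assert (C : (t - x) * (t - x) <= x) by nra.
  assert (D : x * (1 - x / t) - (t - x) = - ((t - x) * (t - x)) / t) by (field; lra).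
  assert (E : (t - x) * (t - x) / t <= 1).
  { apply Rmult_le_reg_r with t. lra. field_simplify; lra. }
  assert (F : - ((t - x) * (t - x)) / t = - ((t - x) * (t - x) / t)) by (field; lra).
  lra.
Qed.

Lemma stir_upper x a b : 1 <= x -> 0 < a <= x -> x <= b ->
  RInt (fg x) a b <= 8 * sqrt x * exp (x * ln x - x + /4).
Proof.
  intros Hx Ha Hb.
  set (L := x * ln x - x). set (k := / (4 * sqrt x)).
  assert (Hsx : 1 <= sqrt x). { rewrite <- sqrt_1. apply sqrt_le_1_alt. lra. }
  assert (Hk : 0 < k) by (unfold k; apply Rinv_0_lt_compat; lra).
  assert (Hk' : / k = 4 * sqrt x) by (unfold k; rewrite Rinv_inv; auto).
  rewrite <- (RInt_Chasles (fg x) a x b) by (apply fg_ex; lra).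
  change plus with Rplus; simpl.
  assert (H1 := is_RInt_expl k (L + /4 - k * x) a x ltac:(lra)).
  assert (H2 := is_RInt_expl (-k) (L + /4 + k * x) x b ltac:(lra)).
  assert (I1 := is_RInt_le _ _ a x _ _ ltac:(lra)
     (RInt_correct (fg x) a x (fg_ex x a x ltac:(lra) ltac:(lra))) H1).
  assert (I2 := is_RInt_le _ _ x b _ _ ltac:(lra)
     (RInt_correct (fg x) x b (fg_ex x x b ltac:(lra) ltac:(lra))) H2).
  assert (J1 : RInt (fg x) a x <= (exp (k * x + (L + / 4 - k * x)) - exp (k * a + (L + / 4 - k * x))) / k).
  { apply I1. intros t Ht. rewrite fg_exp by lra. apply exp_le_exp.
    pose proof (P1 x t Hx ltac:(lra)). rewrite Rabs_left1 in H by lra.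
    unfold L. replace (- (t - x) / (4 * sqrt x)) with (- (t - x) * k) in H by (unfold k; field; lra). nra. }
  assert (J2 : RInt (fg x) x b <= (exp (- k * b + (L + / 4 + k * x)) - exp (- k * x + (L + / 4 + k * x))) / - k).
  { apply I2. intros t Ht. rewrite fg_exp by lra. apply exp_le_exp.
    pose proof (P1 x t Hx ltac:(lra)). rewrite Rabs_right in H by lra.
    unfold L. replace ((t - x) / (4 * sqrt x)) with ((t - x) * k) in H by (unfold k; field; lra). nra. }
  replace (k * x + (L + / 4 - k * x)) with (L + /4) in J1 by ring.
  replace (- k * x + (L + / 4 + k * x)) with (L + /4) in J2 by ring.
  assert (E1 : (exp (L + / 4) - exp (k * a + (L + / 4 - k * x))) / k = exp (L + /4) * / k - exp (k * a + (L + / 4 - k * x)) * / k) by (field; lra).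
  assert (E2 : (exp (- k * b + (L + / 4 + k * x)) - exp (L + / 4)) / - k = exp (L + /4) * / k - exp (- k * b + (L + / 4 + k * x)) * / k) by (field; lra).
  rewrite E1, Hk' in J1. rewrite E2, Hk' in J2.
  assert (0 < exp (k * a + (L + / 4 - k * x)) * (4 * sqrt x)) by (apply Rmult_lt_0_compat; [apply exp_pos|lra]).
  assert (0 < exp (- k * b + (L + / 4 + k * x)) * (4 * sqrt x)) by (apply Rmult_lt_0_compat; [apply exp_pos|lra]).
  nra.
Qed.

Lemma RInt_const_lower x c d v : 0 < c <= d -> (forall t, c < t < d -> v <= fg x t) ->
  (d - c) * v <= RInt (fg x) c d.
Proof.
  intros Hcd Hv.
  assert (Hc := is_RInt_const c d v).
  apply (is_RInt_le (fun _ => v) (fg x) c d _ _ ltac:(lra) Hc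
     (RInt_correct (fg x) c d (fg_ex x c d ltac:(lra) ltac:(lra)))). auto.
Qed.

Lemma RInt_mono x a c d b : 0 < a <= c -> c <= d -> d <= b ->
  RInt (fg x) c d <= RInt (fg x) a b.
Proof.
  intros.
  rewrite <- (RInt_Chasles (fg x) a c b) by (apply fg_ex; lra).
  rewrite <- (RInt_Chasles (fg x) c d b) by (apply fg_ex; lra).
  change plus with Rplus; simpl.
  assert (0 <= RInt (fg x) a c) by (apply RInt_ge_0; [lra|apply fg_ex; lra|intros; left; apply fg_pos]).
  assert (0 <= RInt (fg x) d b) by (apply RInt_ge_0; [lra|apply fg_ex; lra|intros; left; apply fg_pos]).
  lra.
Qed.

Lemma stir_lower x a b : 1 <= x -> 0 < a <= x -> x + sqrt x <= b ->
  sqrt x * exp (x * ln x - x - 1) <= RInt (fg x) a b.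
Proof.
  intros Hx Ha Hb.
  assert (Hs0 : 0 <= sqrt x) by apply sqrt_pos.
  eapply Rle_trans. 2: apply (RInt_mono x a x (x + sqrt x) b); lra.
  replace (sqrt x) with ((x + sqrt x) - x) at 1 by ring.
  apply RInt_const_lower. lra.
  intros t Ht. rewrite fg_exp by lra. apply exp_le_exp. apply P2; lra.
Qed.

Lemma small_upper x a b : 0 <= x <= 1 -> 0 < a <= b -> RInt (fg x) a b <= 4.
Proof.
  intros Hx Hab.
  assert (Hm : forall t, 0 < t -> fg x t <= exp (-/2 * t + ln 2)).
  { intros t Ht. rewrite exp_plus, exp_ln by lra. unfold fg, Rpower.
    assert (A : exp (x * ln t) <= 1 + t).
    { destruct (Rle_dec t 1).
      - assert (ln t <= 0) by (rewrite <- ln_1; apply ln_le; lra).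
        assert (exp (x * ln t) <= exp 0) by (apply exp_le_exp; nra). rewrite exp_0 in H0; lra.
      - assert (0 <= ln t) by (rewrite <- ln_1; apply ln_le; lra).
        assert (exp (x * ln t) <= exp (ln t)) by (apply exp_le_exp; nra). rewrite exp_ln in H0; lra. }
    assert (B : 1 + t <= 2 * exp (/2 * t)) by (pose proof (exp_ineq1_le (/2 * t)); lra).
    assert (C : exp (- t) = exp (-/2 * t) * exp (-/2 * t)) by (rewrite <- exp_plus; f_equal; field).
    assert (D : exp (/2 * t) * exp (-/2 * t) = 1) by (rewrite <- exp_plus, <- exp_0; f_equal; field).
    assert (0 < exp (-/2 * t)) by apply exp_pos.
    assert (0 < exp (x * ln t)) by apply exp_pos.
    rewrite C. nra. }
  pose proof (fg_tail x (ln 2) a b Hm Hab).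
  assert (exp (- / 2 * a + ln 2) <= exp (ln 2)) by (apply exp_le_exp; lra).
  rewrite exp_ln in H0 by lra.
  pose proof (Rle_abs (RInt (fg x) a b)). lra.
Qed.

Lemma small_lower x a b : 0 <= x -> 0 < a <= 1 -> 2 <= b -> exp (-2) <= RInt (fg x) a b.
Proof.
  intros Hx Ha Hb.
  eapply Rle_trans. 2: apply (RInt_mono x a 1 2 b); lra.
  replace (exp (-2)) with ((2 - 1) * exp (-2)) by ring.
  apply RInt_const_lower. lra.
  intros t Ht. rewrite fg_exp by lra. apply exp_le_exp.
  assert (0 <= ln t) by (rewrite <- ln_1; apply ln_le; lra). nra.
Qed.

Definition Sapp (y : R) := (y - /2) * ln y - y.

Lemma ln_sqrt' x : 0 < x -> ln (sqrt x) = ln x / 2.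
Proof.
  intros Hx. assert (0 < sqrt x) by (apply sqrt_lt_R0; lra).
  assert (ln x = ln (sqrt x * sqrt x)) by (rewrite sqrt_sqrt; lra).
  rewrite ln_mult in H0 by lra. lra.
Qed.

Lemma Gamma_est y : 1 <= y -> 0 < Gamma y /\ Rabs (ln (Gamma y) - Sapp y) <= 20.
Proof.
  intros Hy. destruct (Rle_dec 2 y) as [Hy2|Hy2].
  - set (x := y - 1). assert (Hx : 1 <= x) by (unfold x; lra).
    set (L := x * ln x - x).
    assert (Hs0 : 1 <= sqrt x) by (rewrite <- sqrt_1; apply sqrt_le_1_alt; lra).
    assert (HB : sqrt x * exp (L - 1) <= Gamma y <= 8 * sqrt x * exp (L + /4)).
    { apply Gamma_bounds. lra. exists 1, (x + sqrt x). split. lra.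
      intros a b Ha Hb. fold x. split.
      - apply stir_lower; lra.
      - apply stir_upper; lra. }
    assert (Hlo : 0 < sqrt x * exp (L - 1)) by (apply Rmult_lt_0_compat; [lra|apply exp_pos]).
    split. lra.
    assert (A1 : ln (sqrt x * exp (L - 1)) <= ln (Gamma y)) by (apply ln_le; lra).
    assert (A2 : ln (Gamma y) <= ln (8 * sqrt x * exp (L + /4))) by (apply ln_le; lra).
    rewrite ln_mult, ln_exp, ln_sqrt' in A1 by (try apply exp_pos; lra).
    rewrite ln_mult, ln_mult, ln_exp, ln_sqrt' in A2 by (try apply exp_pos; lra).
    assert (l8 : ln 8 <= 7) by (pose proof (ln_le_sub1 8); lra).
    assert (B1 : 0 <= ln (x + 1) - ln x).
    { rewrite <- ln_div by lra. rewrite <- ln_1. apply ln_le. lra.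
      apply Rmult_le_reg_r with x. lra. field_simplify; lra. }
    assert (B2 : ln (x + 1) - ln x <= / x).
    { rewrite <- ln_div by lra. eapply Rle_trans. apply ln_le_sub1. apply Rdiv_lt_0_compat; lra.
      right. field. lra. }
    assert (B3 : (x + /2) * (ln (x + 1) - ln x) <= 3/2).
    { assert ((x + /2) * (ln (x + 1) - ln x) <= (x + /2) * / x) by (apply Rmult_le_compat_l; lra).
      assert ((x + /2) * / x <= 3/2). { apply Rmult_le_reg_r with x. lra. field_simplify; lra. }
      lra. }
    assert (B4 : 0 <= (x + /2) * (ln (x + 1) - ln x)) by (apply Rmult_le_pos; lra).
    set (G := ln (Gamma y)) in *. unfold Sapp. replace y with (x + 1) by (unfold x; ring).
    unfold L in *. apply Rabs_le. split; lra.
  - set (x := y - 1). assert (Hx : 0 <= x <= 1) by (unfold x; lra).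
    assert (HB : exp (-2) <= Gamma y <= 4).
    { apply Gamma_bounds. lra. exists 1, 2. split. lra.
      intros a b Ha Hb. fold x. split.
      - apply small_lower; lra.
      - apply small_upper; lra. }
    assert (He : 0 < exp (-2)) by apply exp_pos.
    split. lra.
    assert (A1 : ln (exp (-2)) <= ln (Gamma y)) by (apply ln_le; lra).
    assert (A2 : ln (Gamma y) <= ln 4) by (apply ln_le; lra).
    rewrite ln_exp in A1.
    assert (l4 : ln 4 <= 3) by (pose proof (ln_le_sub1 4); lra).
    assert (ly0 : 0 <= ln y) by (rewrite <- ln_1; apply ln_le; lra).
    assert (ly1 : ln y <= 1) by (pose proof (ln_le_sub1 y); lra).
    unfold Sapp. apply Rabs_le. split; nra.
Qed.

Lemma ln_ratio_bounds u v : 0 < v -> v <= u -> 0 <= ln (u / v) <= u / v - 1.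
Proof.
  intros Hv Hu. split.
  - rewrite <- ln_1. apply ln_le. lra. apply Rmult_le_reg_r with v. lra. field_simplify; lra.
  - apply ln_le_sub1. apply Rdiv_lt_0_compat; lra.
Qed.

Lemma ln_ratio_lower u v : 0 < v -> 0 < u -> 1 - v / u <= ln (u / v).
Proof.
  intros Hv Hu. assert (H := ln_le_sub1 (v / u) ltac:(apply Rdiv_lt_0_compat; lra)).
  rewrite ln_div in H by lra. rewrite ln_div by lra. lra.
Qed.

Lemma absle x y : Rabs x <= y -> -y <= x <= y.
Proof. unfold Rabs; destruct Rcase_abs; lra. Qed.

Lemma key (b N q1 q2 s : R) : 0 < b -> 1 <= N -> N <= q1 -> N <= q2 -> 2 <= b * N -> q1 / q2 <= s ->
  Rabs (ln ((Gamma (1 + b / 2) * Gamma (b * (q1 + q2) / 2) * Gamma (b * (q1 + q2 - 1) / 2))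
          / (Gamma (1 + b * N / 2) * Gamma (b * q1 / 2) * Gamma (b * q2 / 2) * Gamma (b * (q1 + q2 - N) / 2)))
    - (b * q1 / 2 * ln ((q1 + q2) / q1) + b * q2 / 2 * ln ((q1 + q2) / q2)
       + b * (N - 1) / 2 * ln ((q1 + q2) / N) + / 2 * ln (b * q1) + / 2 * b * N))
  <= 143 + s + b / 2 * ln N + ln (b * N) + b / 2 + b / 2 * (N * N / (q1 + q2)).
Proof.
  intros Hb HN H1 H2 HbN Hs.
  set (p := q1 + q2).
  set (a := b / 2).
  assert (Ha : 0 < a) by (unfold a; lra).
  assert (HaN : 1 <= a * N) by (unfold a; lra).
  assert (Hp : 2 * N <= p) by (unfold p; lra).
  assert (Hpq : p = q1 + q2) by reflexivity.
  destruct (Gamma_est (1 + b / 2) ltac:(lra)) as [G1p E1].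
  destruct (Gamma_est (b * p / 2) ltac:(unfold p; nra)) as [G2p E2].
  destruct (Gamma_est (b * (p - 1) / 2) ltac:(unfold p; nra)) as [G3p E3].
  destruct (Gamma_est (1 + b * N / 2) ltac:(nra)) as [G4p E4].
  destruct (Gamma_est (b * q1 / 2) ltac:(nra)) as [G5p E5].
  destruct (Gamma_est (b * q2 / 2) ltac:(nra)) as [G6p E6].
  destruct (Gamma_est (b * (p - N) / 2) ltac:(unfold p; nra)) as [G7p E7].
  rewrite ln_div by (repeat apply Rmult_lt_0_compat; auto).
  rewrite !ln_mult by (repeat apply Rmult_lt_0_compat; auto).
  apply absle in E1; apply absle in E2; apply absle in E3; apply absle in E4;
  apply absle in E5; apply absle in E6; apply absle in E7.
  unfold Sapp in *.
  assert (Hp1 : 0 < p - 1) by lra.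
  assert (HpN : 0 < p - N) by lra.
  assert (LA2 : ln (b * p / 2) = ln a + ln p).
  { replace (b * p / 2) with (a * p) by (unfold a; field). apply ln_mult; lra. }
  assert (LA3 : ln (b * (p - 1) / 2) = ln a + ln (p - 1)).
  { replace (b * (p - 1) / 2) with (a * (p - 1)) by (unfold a; field). apply ln_mult; lra. }
  assert (LA5 : ln (b * q1 / 2) = ln a + ln q1).
  { replace (b * q1 / 2) with (a * q1) by (unfold a; field). apply ln_mult; lra. }
  assert (LA6 : ln (b * q2 / 2) = ln a + ln q2).
  { replace (b * q2 / 2) with (a * q2) by (unfold a; field). apply ln_mult; lra. }
  assert (LA7 : ln (b * (p - N) / 2) = ln a + ln (p - N)).
  { replace (b * (p - N) / 2) with (a * (p - N)) by (unfold a; field). apply ln_mult; lra. }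
  assert (LF1 : ln (p / q1) = ln p - ln q1) by (apply ln_div; lra).
  assert (LF2 : ln (p / q2) = ln p - ln q2) by (apply ln_div; lra).
  assert (LF3 : ln (p / N) = ln p - ln N) by (apply ln_div; lra).
  assert (LF4 : ln (b * q1) = ln 2 + (ln a + ln q1)).
  { replace (b * q1) with (2 * (a * q1)) by (unfold a; field).
    rewrite !ln_mult; try nra. }
  rewrite LA2, LA3, LA5, LA6, LA7 in *. rewrite LF1, LF2, LF3, LF4.
  assert (Hu2 : ln (1 + b * N / 2) = ln (1 + a * N)) by (unfold a; f_equal; field).
  assert (LaN : ln (a * N) = ln a + ln N) by (apply ln_mult; lra).
  assert (V := ln_ratio_bounds (1 + a * N) (a * N) ltac:(lra) ltac:(lra)).
  rewrite ln_div, LaN in V by lra.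
  assert (V2 : (1 + a * N) / (a * N) - 1 = / (a * N)) by (field; lra).
  rewrite V2 in V.
  assert (T1b : 0 <= a * (N - 1) * (ln (1 + a * N) - (ln a + ln N)) <= 1).
  { set (v := ln (1 + a * N) - (ln a + ln N)) in *.
    assert (a * N * v <= 1).
    { assert (a * N * v <= a * N * / (a * N)) by (apply Rmult_le_compat_l; lra).
      rewrite Rinv_r in H by lra. lra. }
    assert (0 <= a * v) by (apply Rmult_le_pos; lra).
    assert (E : a * (N - 1) * v = a * N * v - a * v) by ring. rewrite E.
    assert (0 <= a * v * (N - 1)) by (apply Rmult_le_pos; lra). split; nra. }
  assert (U1 : 0 <= ln (1 + b / 2)) by (rewrite <- ln_1; apply ln_le; lra).
  assert (U12 : ln (1 + b / 2) <= ln (1 + a * N)) by (apply ln_le; unfold a in *; nra).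
  assert (U12' : ln (1 + a * N) <= ln N + ln (1 + b / 2)).
  { rewrite <- ln_mult by lra. apply ln_le. lra. unfold a in *; nra. }
  assert (T1a : a * (ln (1 + a * N) - ln (1 + b / 2)) <= a * ln N).
  { apply Rmult_le_compat_l; lra. }
  assert (T1a' : 0 <= a * (ln (1 + a * N) - ln (1 + b / 2))) by (apply Rmult_le_pos; lra).
  assert (W2 := ln_ratio_bounds p q2 ltac:(lra) ltac:(lra)).
  rewrite ln_div in W2 by lra.
  assert (W2' : p / q2 - 1 = q1 / q2) by (unfold p; field; lra).
  assert (W3 := ln_ratio_bounds p (p - 1) ltac:(lra) ltac:(lra)).
  rewrite ln_div in W3 by lra.
  assert (W3' : p / (p - 1) - 1 = / (p - 1)) by (field; lra).
  rewrite W3' in W3.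
  assert (T3 : 0 <= a * (p - 1) * (ln p - ln (p - 1)) <= a).
  { split. apply Rmult_le_pos; nra.
    assert (a * (p - 1) * (ln p - ln (p - 1)) <= a * (p - 1) * / (p - 1)) by (apply Rmult_le_compat_l; nra).
    replace (a * (p - 1) * / (p - 1)) with a in H by (field; lra). lra. }
  assert (Ip1 : / (p - 1) <= 1).
  { rewrite <- Rinv_1. apply Rinv_le_contravar; lra. }
  assert (W4 := ln_ratio_bounds p (p - N) ltac:(lra) ltac:(lra)).
  rewrite ln_div in W4 by lra.
  assert (W4' : p / (p - N) - 1 = N / (p - N)) by (field; lra).
  rewrite W4' in W4.
  assert (W4l := ln_ratio_lower p (p - N) ltac:(lra) ltac:(lra)).
  rewrite ln_div in W4l by lra.
  assert (W4l' : 1 - (p - N) / p = N / p) by (field; lra).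
  rewrite W4l' in W4l.
  assert (T4 : a * N - a * N * (N / p) <= a * (p - N) * (ln p - ln (p - N)) <= a * N).
  { split.
    - assert (a * (p - N) * (N / p) <= a * (p - N) * (ln p - ln (p - N))) by (apply Rmult_le_compat_l; nra).
      replace (a * (p - N) * (N / p)) with (a * N - a * N * (N / p)) in H by (field; lra). lra.
    - assert (a * (p - N) * (ln p - ln (p - N)) <= a * (p - N) * (N / (p - N))) by (apply Rmult_le_compat_l; nra).
      replace (a * (p - N) * (N / (p - N))) with (a * N) in H by (field; lra). lra. }
  assert (T4' : N / (p - N) <= 1).
  { apply Rmult_le_reg_r with (p - N). lra. field_simplify; lra. }
  assert (L2 : 0 <= ln 2 <= 1) by (split; [rewrite <- ln_1; apply ln_le; lra | pose proof (ln_le_sub1 2); lra]).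
  assert (LbN : ln (1 + a * N) <= ln (b * N)) by (apply ln_le; unfold a in *; lra).
  assert (LN : 0 <= ln N) by (rewrite <- ln_1; apply ln_le; lra).
  rewrite Hu2 in *.
  assert (NN : a * N * (N / p) = a * (N * N / p)) by (field; lra).
  apply Rabs_le. unfold a in *. rewrite Hpq in *. clear Hpq. unfold p in *. split; lra.
Qed.

Lemma lim_comp_inf (u : nat -> R) (f : R -> R) :
  is_lim_seq u p_infty -> is_lim f p_infty 0 -> is_lim_seq (fun n => f (u n)) 0.
Proof. intros Hu Hf. unfold is_lim_seq. eapply filterlim_comp. exact Hu. exact Hf. Qed.

Theorem lemma3 (beta : nat -> R) (p1 p2 : nat -> nat) (sigma : R)
  (hbeta : forall n, 0 < beta n)
  (hp1 : forall n, (n <= p1 n)%nat)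
  (hp2 : forall n, (n <= p2 n)%nat)
  (hnp1 : is_lim_seq (fun n => INR n / INR (p1 n)) 0)
  (hsigma : 0 <= sigma)
  (hp1p2 : is_lim_seq (fun n => INR (p1 n) / INR (p2 n)) sigma)
  (hbn : is_lim_seq (fun n => beta n * INR n) p_infty) :
  is_lim_seq
    (fun n =>
       let b := beta n in
       let q1 := INR (p1 n) in
       let q2 := INR (p2 n) in
       let p := q1 + q2 in
       (ln (A_const b n (p1 n) (p2 n))
        - (b * q1 / 2 * ln (p / q1) + b * q2 / 2 * ln (p / q2)
           + b * (INR n - 1) / 2 * ln (p / INR n)
           + / 2 * ln (b * q1) + / 2 * b * INR n))
       / (b * INR n))
    0.
Proof.
  set (C := 143 + (sigma + 1)).
  set (g := fun n => C * / (beta n * INR n) + ln (INR n) / INR n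
                     + ln (beta n * INR n) / (beta n * INR n) + / INR n + INR n / INR (p1 n)).
  assert (Hg : is_lim_seq g 0).
  { unfold g. replace 0 with (0 + 0 + 0 + 0 + 0) by ring.
    apply is_lim_seq_plus'. apply is_lim_seq_plus'. apply is_lim_seq_plus'. apply is_lim_seq_plus'.
    - replace 0 with (C * 0) by ring.
      apply (is_lim_seq_scal_l _ C 0).
      apply (is_lim_seq_inv _ p_infty hbn). discriminate.
    - apply (lim_comp_inf INR (fun y => ln y / y)). apply is_lim_seq_INR. apply is_lim_div_ln_p.
    - apply (lim_comp_inf (fun n => beta n * INR n) (fun y => ln y / y)). exact hbn. apply is_lim_div_ln_p.
    - apply (is_lim_seq_inv _ p_infty is_lim_seq_INR). discriminate.
    - exact hnp1. }
  apply is_lim_seq_le_le_loc with (u := fun n => - g n) (w := g).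
  2: { replace (Finite 0) with (Rbar_opp 0) by (simpl; f_equal; ring). apply -> is_lim_seq_opp. exact Hg. }
  2: exact Hg.
  assert (Ev1 : eventually (fun n => 2 < beta n * INR n)).
  { apply hbn. exists 2. auto. }
  assert (Ev2 : eventually (fun n => INR (p1 n) / INR (p2 n) < sigma + 1)).
  { apply (hp1p2 (fun y => y < sigma + 1)). exists (mkposreal 1 ltac:(lra)). intros y Hy.
    change (Rabs (y - sigma) < 1) in Hy. apply Rabs_def2 in Hy. lra. }
  assert (Ev3 : eventually (fun n => (1 <= n)%nat)) by (exists 1%nat; auto).
  destruct Ev1 as [N1 Ev1]. destruct Ev2 as [N2 Ev2]. destruct Ev3 as [N3 Ev3].
  exists (N1 + N2 + N3)%nat. intros n Hn.
  specialize (Ev1 n ltac:(lia)). specialize (Ev2 n ltac:(lia)). specialize (Ev3 n ltac:(lia)).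
  cbv beta zeta. unfold A_const. cbv zeta.
  assert (HN : 1 <= INR n) by (replace 1 with (INR 1) by reflexivity; apply le_INR; lia).
  assert (H1 : INR n <= INR (p1 n)) by (apply le_INR; auto).
  assert (H2 : INR n <= INR (p2 n)) by (apply le_INR; auto).
  pose proof (hbeta n) as Hb.
  pose proof (key (beta n) (INR n) (INR (p1 n)) (INR (p2 n)) (sigma + 1) Hb HN H1 H2 ltac:(lra) ltac:(lra)) as K.
  unfold g; fold C.
  set (b := beta n) in *. set (N := INR n) in *. set (q1 := INR (p1 n)) in *. set (q2 := INR (p2 n)) in *.
  match type of K with Rabs ?Y <= _ => set (Yv := Y) in * end.
  set (B := 143 + (sigma + 1) + b / 2 * ln N + ln (b * N) + b / 2 + b / 2 * (N * N / (q1 + q2))) in *.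
  assert (HbN : 0 < b * N) by lra.
  assert (HB : B / (b * N) <= C * / (b * N) + ln N / N + ln (b * N) / (b * N) + / N + N / q1).
  { assert (E : B / (b * N) = C * / (b * N) + / 2 * (ln N / N) + ln (b * N) / (b * N) + / 2 * / N + / 2 * (N / (q1 + q2))).
    { unfold B, C. field. lra. }
    rewrite E.
    assert (LN : 0 <= ln N) by (rewrite <- ln_1; apply ln_le; lra).
    assert (0 <= ln N / N) by (apply Rdiv_le_0_compat; lra).
    assert (0 < / N) by (apply Rinv_0_lt_compat; lra).
    assert (N / (q1 + q2) <= N / q1).
    { apply Rmult_le_compat_l. lra. apply Rinv_le_contravar; lra. }
    assert (0 <= N / (q1 + q2)) by (apply Rdiv_le_0_compat; lra).
    lra. }
  apply absle in K.
  assert (Hi : 0 < / (b * N)) by (apply Rinv_0_lt_compat; lra).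
  unfold Rdiv at 1. 
  assert (-B * / (b * N) <= Yv * / (b * N) <= B * / (b * N)).
  { split; apply Rmult_le_compat_r; lra. }
  unfold Rdiv in HB. lra.
Qed.
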